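(* Let $V:[0,\infty)\to\mathbb{R}$ be càdlàg with finite variation on compact intervals. Then the set of complex levels for $V$ has zero Lebesgue measure.
   Context: $V(t-)$ denotes the left limit and $\Delta V(t)=V(t)-V(t-)$. A level $x\in\mathbb{R}$ is called simple for $V$ if two conditions hold. First, the set $\{t>0: V(t-)<x<V(t)\text{ or }V(t)<x<V(t-)\text{ or }V(t)=x\}$ is discrete, i.e. has no accumulation point in $[0,\infty)$. Second, there is no $t>0$ with $\Delta V(t)\neq0$ and $x\in\{V(t),V(t-)\}$. A level that is not simple is called complex. *)

(* Defs.v *)
From Stdlib Require Import Reals List.
Open Scope R_scope.

(* V : R -> R models a path on [0,oo); values at negative times are ignored. *)

Definition is_left_lim (V : R -> R) (t l : R) : Prop :=
  forall eps, 0 < eps -> exists delta, 0 < delta /\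
    forall s, 0 <= s -> t - delta < s < t -> Rabs (V s - l) < eps.

Definition cadlag (V : R -> R) : Prop :=
  (forall t, 0 <= t -> forall eps, 0 < eps -> exists delta, 0 < delta /\
      forall s, t <= s < t + delta -> Rabs (V s - V t) < eps) /\
  (forall t, 0 < t -> exists l, is_left_lim V t l).

Fixpoint ascending (p : list R) : Prop :=
  match p with
  | a :: ((b :: _) as r) => a <= b /\ ascending r
  | _ => True
  end.

Fixpoint variation_along (V : R -> R) (p : list R) : R :=
  match p with
  | a :: ((b :: _) as r) => Rabs (V b - V a) + variation_along V r
  | _ => 0
  end.

Definition finite_variation_loc (V : R -> R) : Prop :=
  forall T, 0 <= T -> exists M, forall p : list R,
    ascending p -> Forall (fun t => 0 <= t <= T) p -> variation_along V p <= M.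

Definition hit_time (V : R -> R) (x t : R) : Prop :=
  0 < t /\ exists l, is_left_lim V t l /\
    ((l < x < V t) \/ (V t < x < l) \/ V t = x).

Definition simple_level (V : R -> R) (x : R) : Prop :=
  (* the set of hit times has no accumulation point in [0,oo) *)
  (forall a, 0 <= a -> exists delta, 0 < delta /\
     forall t, hit_time V x t -> ~ (0 < Rabs (t - a) < delta)) /\
  (~ exists t l, 0 < t /\ is_left_lim V t l /\ V t - l <> 0 /\ (x = V t \/ x = l)).

Definition complex_level (V : R -> R) (x : R) : Prop := ~ simple_level V x.

Definition lebesgue_null (S : R -> Prop) : Prop :=
  forall eps, 0 < eps -> exists a b : nat -> R,
    (forall n, a n <= b n) /\
    (forall x, S x -> exists n, a n <= x <= b n) /\
    (forall N, sum_f_R0 (fun n => b n - a n) N <= eps).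

(* Main.v *)
Require Import Defs.
From Stdlib Require Import Reals List Lra Lia ZArith Classical.
Open Scope R_scope.


Lemma left_lim_unique V t l1 l2 : 0 < t -> is_left_lim V t l1 -> is_left_lim V t l2 -> l1 = l2.
Proof.
  intros Ht H1 H2. destruct (Req_dec l1 l2) as [|Hne]; auto.
  set (e := Rabs (l1 - l2) / 2).
  assert (Hp : 0 < Rabs (l1 - l2)) by (apply Rabs_pos_lt; intro; apply Hne; lra).
  assert (He : 0 < e) by (unfold e; lra).
  destruct (H1 e He) as [d1 [Hd1 P1]]. destruct (H2 e He) as [d2 [Hd2 P2]].
  set (s := t - Rmin t (Rmin d1 d2) / 2).
  assert (Hm1 : Rmin t (Rmin d1 d2) <= t) by apply Rmin_l.
  assert (Hm2 : Rmin t (Rmin d1 d2) <= d1) by (eapply Rle_trans; [apply Rmin_r|apply Rmin_l]).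
  assert (Hm3 : Rmin t (Rmin d1 d2) <= d2) by (eapply Rle_trans; [apply Rmin_r|apply Rmin_r]).
  assert (Hm4 : 0 < Rmin t (Rmin d1 d2)) by (repeat apply Rmin_pos; lra).
  specialize (P1 s). specialize (P2 s).
  assert (A1 : Rabs (V s - l1) < e) by (apply P1; unfold s; lra).
  assert (A2 : Rabs (V s - l2) < e) by (apply P2; unfold s; lra).
  unfold e in *. revert A1 A2. unfold Rabs; repeat destruct Rcase_abs; lra.
Qed.

Lemma left_lim_pt V t l a eps : 0 <= a < t -> is_left_lim V t l -> 0 < eps ->
  exists s, a < s < t /\ Rabs (V s - l) < eps.
Proof.
  intros Ha Hl He. destruct (Hl eps He) as [d [Hd P]].
  set (s := t - Rmin (t - a) d / 2).
  assert (Rmin (t - a) d <= t - a) by apply Rmin_l.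
  assert (Rmin (t - a) d <= d) by apply Rmin_r.
  assert (0 < Rmin (t - a) d) by (apply Rmin_pos; lra).
  exists s. split. unfold s; lra. apply P; unfold s; lra.
Qed.

Lemma hit_interval V x t a b : hit_time V x t -> 0 <= a < t -> t <= b ->
  exists u v, a <= u <= b /\ a <= v <= b /\ V u <= x <= V v.
Proof.
  intros [Ht [l [Hl Hc]]] Ha Hb.
  destruct Hc as [[H1 H2]|[[H1 H2]|H]].
  - destruct (left_lim_pt V t l a (x - l) Ha Hl) as [s [Hs Hs2]]; [lra|].
    exists s, t. revert Hs2; unfold Rabs; destruct Rcase_abs; intros; repeat split; lra.
  - destruct (left_lim_pt V t l a (l - x) Ha Hl) as [s [Hs Hs2]]; [lra|].
    exists t, s. revert Hs2; unfold Rabs; destruct Rcase_abs; intros; repeat split; lra.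
  - exists t, t. repeat split; lra.
Qed.

Lemma ll_close V s l p c e : 0 <= p < s -> is_left_lim V s l ->
  (forall u, p < u < s -> Rabs (V u - c) < e) -> Rabs (l - c) <= e.
Proof.
  intros Hp Hl Hu. destruct (Rle_dec (Rabs (l - c)) e) as [|Hn]; auto.
  exfalso. destruct (left_lim_pt V s l p (Rabs (l - c) - e) Hp Hl) as [u [Hu1 Hu2]]; [lra|].
  specialize (Hu u Hu1). revert Hu Hu2 Hn. unfold Rabs; repeat destruct Rcase_abs; lra.
Qed.

Definition Jm (V : R -> R) (m : nat) (t : R) : Prop :=
  0 < t /\ exists l, is_left_lim V t l /\ / INR (S m) < Rabs (V t - l).

Lemma jump_isolated V (hV : cadlag V) m t : Jm V m t ->
  exists d, 0 < d /\ forall s, Jm V m s -> Rabs (s - t) < d -> s = t.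
Proof.
  intros [Ht [l [Hl Hj]]].
  assert (Hm : 0 < / INR (S m)) by (apply Rinv_0_lt_compat, lt_0_INR; lia).
  set (e := / INR (S m) / 4).
  assert (He : 0 < e) by (unfold e; lra).
  destruct (proj1 hV t (Rlt_le _ _ Ht) e He) as [d1 [Hd1 P1]].
  destruct (Hl e He) as [d2 [Hd2 P2]].
  exists (Rmin d1 d2). split; [apply Rmin_pos; lra|].
  assert (Rmin d1 d2 <= d1) by apply Rmin_l.
  assert (Rmin d1 d2 <= d2) by apply Rmin_r.
  intros s [Hs [ls [Hls Hjs]]] Hst.
  destruct (Rtotal_order s t) as [Hlt|[Heq|Hgt]]; auto; exfalso.
  -
    assert (Hst' : t - d2 < s) by (revert Hst; unfold Rabs; destruct Rcase_abs; lra).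
    assert (C1 : Rabs (ls - l) <= e).
    { apply (ll_close V s ls (Rmax (t - d2) 0)); auto.
      - split; [apply Rmax_r|]. apply Rmax_lub_lt; lra.
      - intros u [Hu1 Hu2]. apply P2.
        + apply Rle_trans with (Rmax (t - d2) 0); [apply Rmax_r|lra].
        + split; [|lra]. apply Rle_lt_trans with (Rmax (t - d2) 0); [apply Rmax_l|lra]. }
    assert (C2 : Rabs (V s - l) < e) by (apply P2; lra).
    revert C1 C2 Hjs. unfold e. unfold Rabs; repeat destruct Rcase_abs; lra.
  -
    assert (Hst' : s < t + d1) by (revert Hst; unfold Rabs; destruct Rcase_abs; lra).
    assert (C1 : Rabs (ls - V t) <= e).
    { apply (ll_close V s ls t); auto. lra.
      intros u [Hu1 Hu2]. apply P1. lra. }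
    assert (C2 : Rabs (V s - V t) < e) by (apply P1; lra).
    revert C1 C2 Hjs. unfold e. unfold Rabs; repeat destruct Rcase_abs; lra.
Qed.


Lemma list_min_pos (f : R -> R) (s : list R) :
  Forall (fun t => 0 < f t) s -> exists g, 0 < g /\ g <= 1 /\ Forall (fun t => g <= f t) s.
Proof.
  induction s as [|a s IH]; intros H.
  - exists 1. repeat split; try lra. constructor.
  - inversion H; subst. destruct (IH H3) as [g [Hg [Hg1 Hf]]].
    exists (Rmin g (f a)). split; [apply Rmin_pos; lra|]. split.
    + apply Rle_trans with g; [apply Rmin_l|lra].
    + constructor; [apply Rmin_r|]. eapply Forall_impl; [|exact Hf].
      intros t Ht; simpl in Ht. apply Rle_trans with g; [apply Rmin_l|lra].
Qed.

Lemma list_gap (s : list R) : NoDup s ->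
  exists g, 0 < g /\ forall t t', In t s -> In t' s -> t <> t' -> g <= Rabs (t - t').
Proof.
  induction s as [|a s IH]; intros H.
  - exists 1. split; [lra|]. intros t t' [].
  - inversion H; subst. destruct (IH H3) as [g [Hg Hgap]].
    destruct (list_min_pos (fun t => Rabs (a - t)) s) as [g2 [Hg2 [_ Hf]]].
    { apply Forall_forall. intros t Ht. apply Rabs_pos_lt. intro. apply H2.
      replace a with t by lra. exact Ht. }
    rewrite Forall_forall in Hf.
    exists (Rmin g g2). split; [apply Rmin_pos; lra|].
    intros t t' [E1|E1] [E2|E2] Hne; subst.
    + congruence.
    + apply Rle_trans with g2; [apply Rmin_r|]. apply (Hf t' E2).
    + apply Rle_trans with g2; [apply Rmin_r|]. rewrite Rabs_minus_sym. apply (Hf t E1).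
    + apply Rle_trans with g; [apply Rmin_l|]. apply Hgap; auto.
Qed.

Lemma acc_list V x a :
  (forall delta, 0 < delta -> exists t, hit_time V x t /\ 0 < Rabs (t - a) < delta) ->
  forall M : nat, exists s : list R, length s = M /\ NoDup s /\
    Forall (fun t => hit_time V x t /\ 0 < Rabs (t - a) < 1) s.
Proof.
  intros Hacc M. induction M as [|M IH].
  - exists nil. repeat split; constructor.
  - destruct IH as [s [Hl [Hnd Hf]]].
    destruct (list_min_pos (fun t => Rabs (t - a)) s) as [g [Hg [Hg1 Hgf]]].
    { eapply Forall_impl; [|exact Hf]. intros t [_ Ht]. simpl. lra. }
    destruct (Hacc g Hg) as [t [Ht Hta]].
    exists (t :: s). split; [simpl; congruence|]. split.
    + constructor; auto. intro Hin. rewrite Forall_forall in Hgf.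
      specialize (Hgf t Hin). simpl in Hgf. lra.
    + constructor; auto. split; auto. lra.
Qed.


Lemma exists_idx (h t : R) (K : nat) : 0 < h -> 0 < t -> t <= INR K * h ->
  exists j, (j < K)%nat /\ INR j * h < t <= INR (S j) * h.
Proof.
  intros Hh Ht. induction K as [|K IH]; intros HK.
  - simpl in HK. lra.
  - destruct (Rle_dec t (INR K * h)) as [H|H].
    + destruct (IH H) as [j [Hj1 Hj2]]. exists j. split; [lia|auto].
    + exists K. split; [lia|]. split; lra.
Qed.

Lemma pow2_ge (k : nat) : INR k + 1 <= 2 ^ k.
Proof.
  induction k as [|k IH]; [simpl; lra|]. rewrite S_INR.
  pose proof (pos_INR k). replace (2 ^ S k) with (2 * 2 ^ k) by reflexivity. lra.
Qed.

Lemma small_h (g : R) : 0 < g -> exists k : nat, / 2 ^ k < g.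
Proof.
  intros Hg. destruct (archimed (/ g)) as [H1 _].
  assert (Hz : (0 <= up (/ g))%Z).
  { apply le_IZR. simpl. assert (0 < / g) by (apply Rinv_0_lt_compat; lra). lra. }
  exists (Z.to_nat (up (/ g))).
  assert (E : INR (Z.to_nat (up (/ g))) = IZR (up (/ g))).
  { rewrite INR_IZR_INZ. f_equal. apply Z2Nat.id. exact Hz. }
  pose proof (pow2_ge (Z.to_nat (up (/ g)))) as P. rewrite E in P.
  assert (0 < / g) by (apply Rinv_0_lt_compat; lra).
  assert (/ g < 2 ^ Z.to_nat (up (/ g))) by lra.
  apply Rinv_lt_contravar in H0; [|apply Rmult_lt_0_compat; lra].
  rewrite Rinv_inv in H0. exact H0.
Qed.

Lemma ascending_app (p q : list R) : ascending p -> ascending q ->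
  (forall x y, In x p -> In y q -> x <= y) -> ascending (p ++ q).
Proof.
  induction p as [|a p IH]; intros Hp Hq Hpq; simpl; auto.
  destruct p as [|b p'].
  - simpl. destruct q as [|c q']; auto. split; auto. apply Hpq; simpl; auto.
  - destruct Hp as [Hab Hp]. split; auto. apply IH; auto.
    intros x y Hx Hy. apply Hpq; simpl in *; auto.
Qed.

Lemma var_nonneg V p : 0 <= variation_along V p.
Proof.
  induction p as [|a p IH]; simpl; [lra|]. destruct p; [lra|].
  pose proof (Rabs_pos (V r - V a)). lra.
Qed.

Lemma var_app V (p q : list R) :
  variation_along V p + variation_along V q <= variation_along V (p ++ q).
Proof.
  induction p as [|a p IH]; simpl; [lra|].
  destruct p as [|b p'].
  - simpl. destruct q as [|c q']; simpl; [lra|].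
    pose proof (Rabs_pos (V c - V a)). lra.
  - simpl in *. lra.
Qed.

Fixpoint sumR (D : nat -> R) (K : nat) : R :=
  match K with O => 0 | S K => sumR D K + D K end.

Lemma var_sum_aux V (h : R) (D : nat -> R) (K : nat) : 0 < h ->
  (forall j eps, (j < K)%nat -> 0 < eps -> exists u v,
     INR j * h <= u <= INR (S j) * h /\ INR j * h <= v <= INR (S j) * h /\
     D j - eps <= Rabs (V u - V v)) ->
  forall K', (K' <= K)%nat -> forall eps, 0 < eps -> exists p, ascending p /\
    Forall (fun t => 0 <= t <= INR K' * h) p /\ sumR D K' - eps <= variation_along V p.
Proof.
  intros Hh HD K'. induction K' as [|K' IH]; intros HK eps He.
  - exists nil. simpl. repeat split; [constructor|lra].
  - destruct (IH ltac:(lia) (eps / 2)) as [p [Ha [Hf Hv]]]; [lra|].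
    destruct (HD K' (eps / 2) ltac:(lia)) as [u [v [Hu [Hv' Huv]]]]; [lra|].
    assert (HK0 : 0 <= INR K') by apply pos_INR.
    assert (HS : INR (S K') = INR K' + 1) by apply S_INR.
    exists (p ++ (Rmin u v :: Rmax u v :: nil)). split; [|split].
    + apply ascending_app; auto.
      * simpl. split; auto. unfold Rmin, Rmax; destruct Rle_dec; lra.
      * intros x y Hx Hy. rewrite Forall_forall in Hf. specialize (Hf x Hx).
        simpl in Hy. destruct Hy as [<-|[<-|[]]]; unfold Rmin, Rmax; destruct Rle_dec;
        rewrite HS in *; nra.
    + apply Forall_app. split.
      * eapply Forall_impl; [|exact Hf]. intros t Ht. rewrite HS. nra.
      * rewrite HS in *. constructor; [|constructor; [|constructor]];
        unfold Rmin, Rmax; destruct Rle_dec; nra.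
    + pose proof (var_app V p (Rmin u v :: Rmax u v :: nil)) as E.
      simpl in E |- *. replace (Rabs (V (Rmax u v) - V (Rmin u v)) + 0) with (Rabs (V u - V v)) in E.
      * lra.
      * unfold Rmin, Rmax; destruct Rle_dec; rewrite Rplus_0_r; auto. apply Rabs_minus_sym.
Qed.

Lemma var_sum V (h C : R) (D : nat -> R) (K : nat) : 0 < h ->
  (forall p, ascending p -> Forall (fun t => 0 <= t <= INR K * h) p -> variation_along V p <= C) ->
  (forall j eps, (j < K)%nat -> 0 < eps -> exists u v,
     INR j * h <= u <= INR (S j) * h /\ INR j * h <= v <= INR (S j) * h /\
     D j - eps <= Rabs (V u - V v)) ->
  sumR D K <= C.
Proof.
  intros Hh HC HD. destruct (Rle_dec (sumR D K) C) as [|Hn]; auto. exfalso.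
  destruct (var_sum_aux V h D K Hh HD K (Nat.le_refl K) ((sumR D K - C) / 2)) as [p [Ha [Hf Hv]]]; [lra|].
  specialize (HC p Ha Hf). lra.
Qed.

Lemma bv_bound V (T C : R) : 
  (forall p, ascending p -> Forall (fun t => 0 <= t <= T) p -> variation_along V p <= C) ->
  forall u v, 0 <= u <= T -> 0 <= v <= T -> Rabs (V u - V v) <= C.
Proof.
  intros HC u v Hu Hv. destruct (Rle_dec u v) as [H|H].
  - specialize (HC (u :: v :: nil)). simpl in HC. rewrite Rabs_minus_sym.
    assert (E : Rabs (V v - V u) + 0 <= C) by (apply HC; [split; auto | constructor; [lra|constructor; [lra|constructor]]]).
    lra.
  - specialize (HC (v :: u :: nil)). simpl in HC.
    assert (E : Rabs (V u - V v) + 0 <= C) by (apply HC; [split; [lra|auto] | constructor; [lra|constructor; [lra|constructor]]]).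
    lra.
Qed.

Lemma arch_nat (r : R) : exists N : nat, r < INR N.
Proof.
  destruct (archimed r) as [H1 _].
  destruct (Z_le_gt_dec 0 (up r)) as [Hz|Hz].
  - exists (Z.to_nat (up r)). rewrite INR_IZR_INZ, Z2Nat.id; auto.
  - exists 0%nat. simpl. assert (Hz2 : (up r < 0)%Z) by lia. apply IZR_lt in Hz2. simpl in Hz2. lra.
Qed.

Lemma small_div (CT e : R) : 0 < e -> exists M : nat, CT / INR (S M) <= e.
Proof.
  intros He. destruct (arch_nat (CT / e)) as [N HN]. exists N.
  assert (Hp : 0 < INR (S N)) by (apply lt_0_INR; lia).
  rewrite S_INR in *. apply Rmult_le_reg_r with (INR N + 1); [lra|].
  unfold Rdiv. rewrite Rmult_assoc, Rinv_l; [|lra]. rewrite Rmult_1_r.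
  apply (Rmult_lt_compat_r e) in HN; [|lra].
  unfold Rdiv in HN. rewrite Rmult_assoc, Rinv_l in HN; [|lra]. nra.
Qed.


Lemma complex_split V x : complex_level V x ->
  (exists t l, 0 < t /\ is_left_lim V t l /\ V t - l <> 0 /\ (x = V t \/ x = l)) \/
  (exists a, 0 <= a /\ forall delta, 0 < delta -> exists t, hit_time V x t /\ 0 < Rabs (t - a) < delta).
Proof.
  unfold complex_level, simple_level. intros H.
  destruct (classic (exists t l, 0 < t /\ is_left_lim V t l /\ V t - l <> 0 /\ (x = V t \/ x = l))) as [J|J];
    [left; auto|right].
  apply NNPP; intro K. apply H. split; [|auto].
  intros a Ha. apply NNPP; intro K2. apply K. exists a. split; auto.
  intros delta Hd. apply NNPP; intro K3. apply K2. exists delta. split; auto.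
  intros t Ht Hc. apply K3. exists t. auto.
Qed.

Lemma jump_m V t l : 0 < t -> is_left_lim V t l -> V t - l <> 0 -> exists m, Jm V m t.
Proof.
  intros Ht Hl Hne. assert (Hp : 0 < Rabs (V t - l)) by (apply Rabs_pos_lt; auto).
  destruct (arch_nat (/ Rabs (V t - l))) as [N HN]. exists N. split; auto. exists l. split; auto.
  assert (HS : INR N < INR (S N)) by (apply lt_INR; lia).
  assert (H0 : 0 < / Rabs (V t - l)) by (apply Rinv_0_lt_compat; auto).
  rewrite <- (Rinv_inv (Rabs (V t - l))). apply Rinv_lt_contravar; [nra|lra].
Qed.

Lemma acc_infhit V x a : 0 <= a ->
  (forall delta, 0 < delta -> exists t, hit_time V x t /\ 0 < Rabs (t - a) < delta) ->
  exists n : nat, forall M : nat, exists s : list R,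
    length s = M /\ NoDup s /\ Forall (fun t => hit_time V x t /\ t <= INR (S n)) s.
Proof.
  intros Ha Hacc. destruct (arch_nat a) as [n Hn]. exists n. intros M.
  destruct (acc_list V x a Hacc M) as [s [Hl [Hnd Hf]]]. exists s. split; auto. split; auto.
  eapply Forall_impl; [|exact Hf]. intros t [Ht Hta]. split; auto.
  rewrite S_INR. revert Hta. unfold Rabs; destruct Rcase_abs; lra.
Qed.

Set Warnings "-all".
From mathcomp Require Import all_boot all_order all_algebra.
From mathcomp Require Import all_classical all_reals all_analysis.
From mathcomp Require Import Rstruct Rstruct_topology zify.
Import Order.TTheory GRing.Theory Num.Theory.
Import numFieldNormedType.Exports.
Local Open Scope classical_set_scope.
Open Scope R_scope.

Definition hh (k : nat) : R := / 2 ^ k.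
Definition Ik (k j : nat) : set R := fun u => INR j * hh k <= u <= INR (S j) * hh k.
Definition Sk (V : R -> R) (k j : nat) : set R := fun y => exists u, Ik k j u /\ V u = y.
Definition lo V k j : R := inf (Sk V k j).
Definition hi V k j : R := sup (Sk V k j).
Definition Hs V k j : set R := [set` Interval (BLeft (lo V k j)) (BRight (hi V k j))].
Definition KK (n k : nat) : nat := Nat.mul (S n) (Nat.pow 2 k).
Definition cnt V n k (x : R) : nat := count (fun j => x \in Hs V k j) (iota 0 (KK n k)).

Lemma hh_pos k : 0 < hh k.
Proof. unfold hh. apply Rinv_0_lt_compat, pow_lt. lra. Qed.

Lemma KK_hh n k : INR (KK n k) * hh k = INR (S n).
Proof.
  unfold KK, hh. rewrite mult_INR pow_INR.
  replace (INR 2) with 2 by (simpl; lra).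
  rewrite Rmult_assoc Rinv_r; [lra|]. apply pow_nonzero. lra.
Qed.

Lemma Ik_sub n k j : (j < KK n k)%nat -> forall u, Ik k j u -> 0 <= u <= INR (S n).
Proof.
  intros Hj u [H1 H2]. pose proof (hh_pos k). pose proof (pos_INR j).
  assert (INR (S j) <= INR (KK n k)) by (apply le_INR; lia).
  rewrite <- (KK_hh n k). split; nra.
Qed.

Lemma Sk_ne V k j : Sk V k j (V (INR j * hh k)).
Proof.
  exists (INR j * hh k). split; auto. unfold Ik. rewrite S_INR. pose proof (hh_pos k). split; nra.
Qed.

Lemma Sk_bnd V n C k j : (j < KK n k)%nat ->
  (forall u v, 0 <= u <= INR (S n) -> 0 <= v <= INR (S n) -> Rabs (V u - V v) <= C) ->
  forall y, Sk V k j y -> V 0 - C <= y <= V 0 + C.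
Proof.
  intros Hj HC y [u [Hu <-]]. have Hu' := Ik_sub n k j Hj u Hu.
  assert (H0 : 0 <= 0 <= INR (S n)) by (pose proof (pos_INR (S n)); lra).
  specialize (HC u 0 Hu' H0). revert HC. unfold Rabs; destruct Rcase_abs; lra.
Qed.

Lemma Sk_has_sup V n C k j : (j < KK n k)%nat ->
  (forall u v, 0 <= u <= INR (S n) -> 0 <= v <= INR (S n) -> Rabs (V u - V v) <= C) ->
  has_sup (Sk V k j) /\ has_inf (Sk V k j).
Proof.
  intros Hj HC. split; split.
  - exists (V (INR j * hh k)). apply Sk_ne.
  - exists (V 0 + C). intros y Hy. apply/RleP. apply (Sk_bnd V n C k j Hj HC y Hy).
  - exists (V (INR j * hh k)). apply Sk_ne.
  - exists (V 0 - C). intros y Hy. apply/RleP. apply (Sk_bnd V n C k j Hj HC y Hy).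
Qed.


Definition BndC V n C := forall u v, 0 <= u <= INR (S n) -> 0 <= v <= INR (S n) -> Rabs (V u - V v) <= C.

Lemma Hs_mem V n C k j x : (j < KK n k)%nat -> BndC V n C ->
  forall u v, Ik k j u -> Ik k j v -> V u <= x <= V v -> Hs V k j x.
Proof.
  intros Hj HC u v Hu Hv [H1 H2]. destruct (Sk_has_sup V n C k j Hj HC) as [Hsu Hin].
  rewrite /Hs /= in_itv /=. apply/andP; split.
  - have L : (lo V k j <= V u)%R by apply: (ge_inf Hin.2); exists u.
    apply: (le_trans L). by apply/RleP.
  - have L : (V v <= hi V k j)%R by apply: (sup_upper_bound Hsu); exists v.
    apply: (le_trans _ L). by apply/RleP.
Qed.

Lemma lo_le_hi V n C k j : (j < KK n k)%nat -> BndC V n C -> lo V k j <= hi V k j.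
Proof.
  intros Hj HC. destruct (Sk_has_sup V n C k j Hj HC) as [Hsu Hin].
  have L1 : (lo V k j <= V (INR j * hh k))%R by apply: (ge_inf Hin.2); apply: Sk_ne.
  have L2 : (V (INR j * hh k) <= hi V k j)%R by apply: (sup_upper_bound Hsu); apply: Sk_ne.
  apply/RleP. exact: le_trans L1 L2.
Qed.

Lemma osc_adh V n C k j eps : (j < KK n k)%nat -> BndC V n C -> 0 < eps ->
  exists u v, Ik k j u /\ Ik k j v /\ hi V k j - lo V k j - eps <= Rabs (V u - V v).
Proof.
  intros Hj HC He. destruct (Sk_has_sup V n C k j Hj HC) as [Hsu Hin].
  set e2 := eps / 2.
  have H2 : 0 < e2 by unfold e2; lra.
  have He2 : (0 < e2)%R by apply/RltP.
  destruct (sup_adherent He2 Hsu) as [y [u [Hu <-]] Hy].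
  destruct (inf_adherent He2 Hin) as [y' [v [Hv <-]] Hy'].
  move/RltP: Hy => Hy. move/RltP: Hy' => Hy'.
  rewrite -RminusE in Hy. rewrite -RplusE in Hy'.
  exists u, v. split; auto. split; auto.
  rewrite /hi /lo. revert Hy Hy'. unfold e2.
  intros A B. apply Rle_trans with (V u - V v); [lra| apply Rle_abs].
Qed.


Lemma Hs_iff V k j x : Hs V k j x <-> lo V k j <= x <= hi V k j.
Proof.
  rewrite /Hs /= in_itv /=. split.
  - by move/andP => [/RleP A /RleP B].
  - by move=> [A B]; apply/andP; split; apply/RleP.
Qed.

Lemma hi_ub V n C k j y : (j < KK n k)%nat -> BndC V n C -> Sk V k j y -> y <= hi V k j.
Proof.
  intros Hj HC Hy. destruct (Sk_has_sup V n C k j Hj HC) as [Hsu Hin].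
  apply/RleP. exact: (sup_upper_bound Hsu).
Qed.

Lemma lo_lb V n C k j y : (j < KK n k)%nat -> BndC V n C -> Sk V k j y -> lo V k j <= y.
Proof.
  intros Hj HC Hy. destruct (Sk_has_sup V n C k j Hj HC) as [Hsu Hin].
  apply/RleP. exact: (ge_inf Hin.2).
Qed.

Lemma hi_le V k j c : (forall y, Sk V k j y -> y <= c) -> hi V k j <= c.
Proof.
  intros H. apply/RleP. apply: ge_sup.
  - exists (V (INR j * hh k)). apply Sk_ne.
  - move=> y Hy. apply/RleP. exact: H.
Qed.

Lemma lo_ge V k j c : (forall y, Sk V k j y -> c <= y) -> c <= lo V k j.
Proof.
  intros H. apply/RleP. apply: lb_le_inf.
  - exists (V (INR j * hh k)). apply Sk_ne.
  - move=> y Hy. apply/RleP. exact: H.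
Qed.

Lemma hh_S k : hh (S k) = hh k / 2.
Proof. unfold hh. simpl. rewrite Rinv_mult. lra. Qed.

Lemma INR2 j : INR (2 * j) = 2 * INR j.
Proof. rewrite mulnE mult_INR. simpl. lra. Qed.
Lemma INR2S j : INR (S (2 * j)) = 2 * INR j + 1.
Proof. rewrite S_INR INR2; lra. Qed.
Lemma INR2p1 j : INR (2 * j + 1) = 2 * INR j + 1.
Proof. rewrite addnE plus_INR INR2. simpl. lra. Qed.
Lemma INR2p1S j : INR (S (2 * j + 1)) = 2 * INR j + 2.
Proof. rewrite S_INR INR2p1; lra. Qed.

Lemma Ik_split k j u : Ik k j u -> Ik (S k) (2 * j) u \/ Ik (S k) (2 * j + 1) u.
Proof.
  unfold Ik. rewrite hh_S ?INR2S ?INR2p1S ?INR2 ?INR2p1 ?S_INR.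
  pose proof (hh_pos k). intros [A B].
  destruct (Rle_dec u ((INR j + / 2) * hh k)); [left|right]; split; nra.
Qed.

Lemma Ik_child1 k j u : Ik (S k) (2 * j) u -> Ik k j u.
Proof.
  unfold Ik. rewrite hh_S ?INR2S ?INR2p1S ?INR2 ?INR2p1 ?S_INR.
  pose proof (hh_pos k). intros [A B]. split; nra.
Qed.

Lemma Ik_child2 k j u : Ik (S k) (2 * j + 1) u -> Ik k j u.
Proof.
  unfold Ik. rewrite hh_S ?INR2S ?INR2p1S ?INR2 ?INR2p1 ?S_INR.
  pose proof (hh_pos k). intros [A B]. split; nra.
Qed.

Lemma Ik_mid k j : Ik (S k) (2 * j) (INR (S (2 * j)) * hh (S k)) /\
                   Ik (S k) (2 * j + 1) (INR (S (2 * j)) * hh (S k)).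
Proof.
  unfold Ik. rewrite hh_S ?INR2S ?INR2p1S ?INR2 ?INR2p1 ?S_INR.
  pose proof (hh_pos k). split; split; nra.
Qed.

Lemma KK_S n k : KK n (S k) = (2 * KK n k)%coq_nat.
Proof. unfold KK. simpl Nat.pow. lia. Qed.

Lemma Hs_split V n C k j x : (j < KK n k)%nat -> BndC V n C -> Hs V k j x ->
  Hs V (S k) (2 * j) x \/ Hs V (S k) (2 * j + 1) x.
Proof.
  intros Hj HC Hx.
  have Hj1 : (2 * j < KK n (S k))%nat by rewrite KK_S; lia.
  have Hj2 : (2 * j + 1 < KK n (S k))%nat by rewrite KK_S; lia.
  rewrite !Hs_iff in Hx |- *.
  set m := INR (S (2 * j)) * hh (S k).
  destruct (Ik_mid k j) as [M1 M2]. fold m in M1, M2.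
  have S1 : Sk V (S k) (2 * j) (V m) by exists m.
  have S2 : Sk V (S k) (2 * j + 1) (V m) by exists m.
  have L1 := lo_lb V n C _ _ _ Hj1 HC S1. have L2 := lo_lb V n C _ _ _ Hj2 HC S2.
  have U1 := hi_ub V n C _ _ _ Hj1 HC S1. have U2 := hi_ub V n C _ _ _ Hj2 HC S2.
  have Hmax : hi V k j <= Rmax (hi V (S k) (2 * j)) (hi V (S k) (2 * j + 1)).
  { apply hi_le. intros y [u [Hu <-]]. destruct (Ik_split _ _ _ Hu) as [Hu'|Hu'].
    - apply Rle_trans with (hi V (S k) (2 * j)); [|apply Rmax_l].
      apply (hi_ub V n C _ _ _ Hj1 HC). by exists u.
    - apply Rle_trans with (hi V (S k) (2 * j + 1)); [|apply Rmax_r].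
      apply (hi_ub V n C _ _ _ Hj2 HC). by exists u. }
  have Hmin : Rmin (lo V (S k) (2 * j)) (lo V (S k) (2 * j + 1)) <= lo V k j.
  { apply lo_ge. intros y [u [Hu <-]]. destruct (Ik_split _ _ _ Hu) as [Hu'|Hu'].
    - apply Rle_trans with (lo V (S k) (2 * j)); [apply Rmin_l|].
      apply (lo_lb V n C _ _ _ Hj1 HC). by exists u.
    - apply Rle_trans with (lo V (S k) (2 * j + 1)); [apply Rmin_r|].
      apply (lo_lb V n C _ _ _ Hj2 HC). by exists u. }
  destruct Hx as [X1 X2].
  destruct (Rle_dec x (hi V (S k) (2 * j))) as [A1|A1];
  destruct (Rle_dec x (hi V (S k) (2 * j + 1))) as [A2|A2];
  destruct (Rle_dec (lo V (S k) (2 * j)) x) as [B1|B1];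
  destruct (Rle_dec (lo V (S k) (2 * j + 1)) x) as [B2|B2];
  try (left; lra); try (right; lra); exfalso;
  unfold Rmax, Rmin in *; repeat destruct Rle_dec; lra.
Qed.


Lemma count_double (P Q : pred nat) L :
  (forall j, (j < L)%nat -> P j -> Q (2 * j)%nat || Q (2 * j + 1)%nat) ->
  (count P (iota 0 L) <= count Q (iota 0 (2 * L)))%nat.
Proof.
  elim: L => [|L IH] H; first by [].
  have -> : (2 * L.+1 = 2 * L + 2)%N by lia.
  rewrite -(addn1 L) [iota 0 (2 * L + 2)]iotaD [iota 0 (L + 1)]iotaD !count_cat !add0n.
  apply: leq_add; first by apply: IH => j Hj; apply: H; lia.
  rewrite /=. rewrite addn0. case HP: (P L); last by [].
  have := H L (ltnSn L) HP. rewrite addn1.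
  by case: (Q (2 * L)%N) => //=; case: (Q (2 * L).+1).
Qed.

Lemma cnt_mono V n C k x : BndC V n C -> (cnt V n k x <= cnt V n (S k) x)%nat.
Proof.
  intros HC. rewrite /cnt KK_S -mulnE. apply: count_double => j Hj Hx.
  have Hx' : Hs V k j x by apply: set_mem.
  destruct (Hs_split V n C k j x Hj HC Hx') as [A|A].
  - by apply/orP; left; apply: mem_set.
  - by apply/orP; right; apply: mem_set.
Qed.

Lemma cnt_mono_le V n C k k' x : BndC V n C -> (k <= k')%nat -> (cnt V n k x <= cnt V n k' x)%nat.
Proof.
  intros HC. elim: k' => [|k' IH] Hk.
  - by have -> : k = 0%nat by lia.
  - case: (ltngtP k k'.+1) Hk => // [Hlt _|-> _]; last by [].
    apply: leq_trans (IH _) (cnt_mono V n C k' x HC). lia.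
Qed.

Lemma count_split (P : pred nat) j0 l :
  count P l = (count (fun j => P j && (j != j0)) l + count (fun j => P j && (j == j0)) l)%nat.
Proof.
  elim: l => [|y l IH] //=. rewrite IH. case: (P y) => /=; case: (y == j0) => /=; lia.
Qed.

Lemma count_lb (P : pred nat) K (s : list R) (Rel : R -> nat -> Prop) :
  NoDup s -> (forall t, In t s -> exists j, (j < K)%nat /\ P j /\ Rel t j) ->
  (forall t t' j, In t s -> In t' s -> Rel t j -> Rel t' j -> t = t') ->
  (length s <= count P (iota 0 K))%nat.
Proof.
  elim: s P => [|a s IH] P Hnd Hex Huniq /=; first by [].
  inversion Hnd as [|a' s' Hnot Hnd']; subst.
  destruct (Hex a (or_introl erefl)) as [j0 [Hj0 [HP0 HR0]]].
  rewrite (count_split P j0).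
  have E : count (fun j => P j && (j == j0)) (iota 0 K) = 1%nat.
  { rewrite (eq_count (a2 := pred1 j0)); last first.
      move=> j /=. case E: (j == j0); last by rewrite andbF.
      by move/eqP: E => ->; rewrite HP0.
    rewrite count_uniq_mem ?iota_uniq // mem_iota. by rewrite Hj0. }
  rewrite E addn1 ltnS. apply: IH => //.
  - move=> t Ht. destruct (Hex t (or_intror Ht)) as [j [Hj [HPj HRj]]].
    exists j. split; auto. split; auto. rewrite HPj /=. apply/eqP => Ej. subst j.
    have := Huniq a t j0 (or_introl erefl) (or_intror Ht) HR0 HRj. move=> Eat; subst. auto.
  - move=> t t' j Ht Ht' R1 R2. exact: (Huniq t t' j (or_intror Ht) (or_intror Ht') R1 R2).
Qed.

Lemma cnt_lb V n C k x (s : list R) : BndC V n C -> NoDup s ->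
  Forall (fun t => hit_time V x t /\ t <= INR (S n)) s ->
  (forall t t', In t s -> In t' s -> t <> t' -> hh k <= Rabs (t - t')) ->
  (length s <= cnt V n k x)%nat.
Proof.
  intros HC Hnd Hf Hgap. rewrite /cnt.
  apply: (count_lb _ _ _ (fun t j => INR j * hh k < t <= INR (S j) * hh k)) => //.
  - move=> t Ht. rewrite Forall_forall in Hf. destruct (Hf t Ht) as [Hh Htn].
    have Ht0 : 0 < t by destruct Hh.
    destruct (exists_idx (hh k) t (KK n k) (hh_pos k) Ht0) as [j [Hj [A B]]].
    { rewrite KK_hh. exact Htn. }
    exists j. split; [lia|]. split; [|split; auto].
    apply: mem_set.
    have Ha : 0 <= INR j * hh k < t by (pose proof (pos_INR j); pose proof (hh_pos k); split; [nra|lra]).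
    destruct (hit_interval V x t _ _ Hh Ha B) as [u [v [Hu [Hv Hx]]]].
    apply: (Hs_mem V n C k j x _ HC u v Hu Hv Hx). lia.
  - move=> t t' j Ht Ht' [A1 B1] [A2 B2].
    destruct (Req_dec t t') as [|Hne]; auto. exfalso.
    have G := Hgap t t' Ht Ht' Hne. rewrite S_INR in B1 B2.
    revert G. unfold Rabs; destruct Rcase_abs; intros; lra.
Qed.


Definition InfHit V (n : nat) (x : R) : Prop := forall M : nat, exists s : list R,
  length s = M /\ NoDup s /\ Forall (fun t => hit_time V x t /\ t <= INR (S n)) s.

Lemma infhit_cnt V n C x : BndC V n C -> InfHit V n x -> forall M, exists k, (M <= cnt V n k x)%nat.
Proof.
  intros HC Hi M. destruct (Hi M) as [s [Hl [Hnd Hf]]].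
  destruct (list_gap s Hnd) as [g [Hg Hgap]].
  destruct (small_h g Hg) as [k Hk]. exists k.
  rewrite -Hl. apply: (cnt_lb V n C k x s HC Hnd Hf).
  move=> t t' Ht Ht' Hne. unfold hh. apply Rle_trans with g; [lra|]. auto.
Qed.

Definition VarB V n CT := forall p, ascending p ->
  Forall (fun t => 0 <= t <= INR (S n)) p -> variation_along V p <= CT.

Lemma VarB_Bnd V n CT : VarB V n CT -> BndC V n CT.
Proof. intros H. exact (bv_bound V (INR (S n)) CT H). Qed.

Lemma osc_sum V n CT k : VarB V n CT -> sumR (fun j => hi V k j - lo V k j) (KK n k) <= CT.
Proof.
  intros HV. have HC := VarB_Bnd V n CT HV.
  apply (var_sum V (hh k) CT _ (KK n k) (hh_pos k)).
  - rewrite KK_hh. exact HV.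
  - intros j eps Hj He. have Hj' : (j < KK n k)%N by lia.
    destruct (osc_adh V n CT k j eps Hj' HC He) as [u [v [Hu [Hv H]]]].
    exists u, v. auto.
Qed.

From mathcomp Require Import measurable_realfun.
Definition RT : realType := R.
Local Open Scope ring_scope.
Local Open Scope ereal_scope.

Definition FF V n k (x : RT) : \bar RT := \sum_(j <- iota 0 (KK n k)) (\1_(Hs V k j) x)%:E.

Lemma FF_cnt V n k x : FF V n k x = ((cnt V n k x)%:R)%:E.
Proof.
  rewrite /FF /cnt sumEFin. congr (_%:E).
  elim: (iota 0 (KK n k)) => [|j l IH]; first by rewrite big_nil.
  rewrite big_cons /= IH indicE natrD. by case: (x \in Hs V k j).
Qed.


Lemma Hs_meas V k j : measurable (Hs V k j : set RT).
Proof. exact: measurable_itv. Qed.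

Lemma FF_meas V n k : measurable_fun setT (FF V n k).
Proof.
  apply: emeasurable_sum => j. apply/measurable_EFinP. exact: measurable_indic (Hs_meas V k j).
Qed.

Lemma FF_ge0 V n k x : 0 <= FF V n k x.
Proof. rewrite FF_cnt lee_fin. exact: ler0n. Qed.

Lemma sum_sumR D K : (\sum_(j <- iota 0 K) D j)%R = sumR D K.
Proof.
  elim: K => [|K IH]; first by rewrite big_nil.
  rewrite -addn1 iotaD big_cat big_seq1 /=. by rewrite IH add0n addn1.
Qed.

Lemma Hs_measure V n C k j : (j < KK n k)%nat -> BndC V n C ->
  lebesgue_measure (Hs V k j : set RT) = ((hi V k j - lo V k j)%R)%:E.
Proof.
  move=> Hj HC. have Hle := lo_le_hi V n C k j Hj HC.
  rewrite /Hs lebesgue_measure_itv /=.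
  case: ifPn => [//|]. rewrite lte_fin -leNgt => H.
  have E : hi V k j = lo V k j by apply/eqP; rewrite eq_le H; apply/RleP.
  by rewrite E subrr.
Qed.

Lemma FF_int V n C k : BndC V n C ->
  \int[lebesgue_measure]_(x in [set: RT]) FF V n k x = (sumR (fun j => hi V k j - lo V k j) (KK n k))%:E.
Proof.
  move=> HC. rewrite /FF ge0_integral_sum //.
  rewrite -sum_sumR -sumEFin. apply: eq_big_seq => j. rewrite mem_iota add0n => /andP [_ Hj].
  rewrite integral_indic //; last exact: Hs_meas.
  have E : Hs V k j `&` [set: RT] = Hs V k j by apply/seteqP; split => x //; case.
  rewrite E. exact: (Hs_measure V n C).
  move=> j. apply/measurable_EFinP. exact: measurable_indic (Hs_meas V k j).
Qed.

Definition Eset V n k M : set RT := [set x | (M <= cnt V n k x)%N].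

Lemma Eset_eq V n k M : Eset V n k M = [set: RT] `&` [set x | (M%:R)%:E <= FF V n k x].
Proof.
  apply/seteqP; split => x /=.
  - move=> H; split => //. by rewrite FF_cnt lee_fin ler_nat.
  - by move=> [_]; rewrite FF_cnt lee_fin ler_nat.
Qed.

Lemma Eset_meas V n k M : measurable (Eset V n k M).
Proof. rewrite Eset_eq. apply: emeasurable_fun_c_infty => //. exact: FF_meas. Qed.

Lemma Eset_markov V n CT k M : VarB V n CT ->
  (M%:R)%:E * lebesgue_measure (Eset V n k M) <= CT%:E.
Proof.
  move=> HV. have HC := VarB_Bnd V n CT HV.
  have mE := Eset_meas V n k M.
  have E1 : lebesgue_measure (Eset V n k M) = \int[lebesgue_measure]_(x in [set: RT]) (\1_(Eset V n k M) x)%:E.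
  { rewrite integral_indic //. congr (lebesgue_measure _). apply/seteqP; split => x /=; [by move=> ?; split| by case]. }
  have B : (sumR (fun j => hi V k j - lo V k j) (KK n k))%:E <= CT%:E.
  { rewrite lee_fin. apply/RleP. exact: (osc_sum V n CT k HV). }
  rewrite E1 -ge0_integralZl //; last first.
    apply/measurable_EFinP. exact: measurable_indic.
  apply: le_trans B. rewrite -(FF_int V n CT k HC). apply: ge0_le_integral => //.
  - apply: emeasurable_funM => //. apply/measurable_EFinP. exact: measurable_indic.
  - exact: FF_meas.
  - move=> x _. rewrite FF_cnt indicE. case: (boolP (x \in Eset V n k M)) => Hx.
    + rewrite mule1 lee_fin ler_nat. by move/set_mem: Hx.
    + rewrite mule0 lee_fin. exact: ler0n.
Qed.


Lemma Eset_bound V n CT k M : (0 < M)%N -> VarB V n CT ->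
  lebesgue_measure (Eset V n k M) <= (CT / M%:R)%:E.
Proof.
  move=> HM HV. have Mk := Eset_markov V n CT k M HV.
  have Mp : (0 < M%:R :> R)%R by rewrite ltr0n.
  move: Mk. have Hge : 0 <= lebesgue_measure (Eset V n k M) by exact: measure_ge0.
  case: (lebesgue_measure (Eset V n k M)) Hge => [r| |] //= Hr.
  - rewrite -EFinM !lee_fin => H. by rewrite ler_pdivlMr // mulrC.
  - by rewrite mulry gtr0_sg // mul1e leye_eq.
Qed.

Definition Gset V n M : set RT := \bigcup_k Eset V n k M.

Lemma Gset_bound V n CT M : (0 < M)%N -> VarB V n CT ->
  lebesgue_measure (Gset V n M) <= (CT / M%:R)%:E.
Proof.
  move=> HM HV. have HC := VarB_Bnd V n CT HV.
  have mE k : measurable (Eset V n k M) := Eset_meas V n k M.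
  have mG : measurable (Gset V n M) by apply: bigcupT_measurable.
  have nd : nondecreasing_seq (fun k => Eset V n k M).
  { move=> k k' Hk. apply/subsetPset => x /=. move=> H. apply: leq_trans H _.
    exact: (cnt_mono_le V n CT k k' x HC Hk). }
  have H := @nondecreasing_cvg_mu _ _ _ lebesgue_measure _ mE mG nd.
  rewrite -(cvg_lim (@ereal_hausdorff _) H).
  apply: lime_le; first by apply/cvg_ex; eexists; exact: H.
  apply: nearW => k. exact: Eset_bound.
Qed.

Definition Zset V n : set RT := \bigcap_M Gset V n M.+1.

Lemma Zset_null V n CT : VarB V n CT -> lebesgue_measure (Zset V n) = 0.
Proof.
  move=> HV. have mZ : measurable (Zset V n).
  { apply: bigcapT_measurable => M. apply: bigcupT_measurable => k. exact: Eset_meas. }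
  apply/eqP; rewrite eq_le measure_ge0 andbT.
  apply/lee_addgt0Pr => e He. rewrite add0e.
  have He' : Rlt 0 e by move/RltP: He.
  destruct (small_div CT e He') as [M HM].
  apply: (@le_trans _ _ (lebesgue_measure (Gset V n M.+1))).
  - apply: le_measure; rewrite ?inE //.
    + apply: bigcupT_measurable => k. exact: Eset_meas.
    + by move=> x Hx; apply: Hx.
  - apply: (le_trans (Gset_bound V n CT M.+1 (ltn0Sn M) HV)).
    rewrite lee_fin -INRE -RdivE. by apply/RleP.
Qed.


Lemma ball_R (x y d : RT) : ball x d y <-> Rlt (Rabs (x - y)) d.
Proof.
  rewrite -ball_normE /ball_ /=. split; [move/RltP; done| move=> H; by apply/RltP].
Qed.

Lemma Jm_isolated V (hV : cadlag V) m :
  [set t : RT | Jm V m t] `<=` isolated [set t : RT | Jm V m t].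
Proof.
  move=> t Ht. split; first by apply: mem_set.
  destruct (jump_isolated V hV m t Ht) as [d [Hd Hiso]].
  exists (ball t d).
  - apply: nbhsx_ballx. by apply/RltP.
  - apply/seteqP; split => s /=.
    + move=> [Hb Hs]. apply: (Hiso s Hs). move/ball_R: Hb. by rewrite Rabs_minus_sym.
    + move=> ->. split => //. apply/ball_R. rewrite Rminus_diag Rabs_R0. exact Hd.
Qed.

Definition Jset V : set RT := \bigcup_m [set t : RT | Jm V m t].

Lemma Jset_countable V (hV : cadlag V) : countable (Jset V).
Proof.
  apply: bigcup_countable; first exact: countableP.
  move=> m _. apply: sub_countable (countable_isolated [set t : RT | Jm V m t]).
  apply: subset_card_le. exact: Jm_isolated.
Qed.

Definition LL V (t : RT) : RT := xget 0%R (is_left_lim V t).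

Lemma countable_null (A : set RT) : countable A -> lebesgue_measure.-negligible A.
Proof.
  move=> HA. exists A; split => //.
  - exact: countable_measurable.
  - exact: countable_lebesgue_measure0.
Qed.

Lemma JL_null V (hV : cadlag V) :
  lebesgue_measure.-negligible ((V @` Jset V) `|` (LL V @` Jset V)).
Proof.
  apply: negligibleU; apply: countable_null;
  apply: sub_countable (Jset_countable V hV); exact: card_image_le.
Qed.


Lemma sum_f_big (f : nat -> R) N : sum_f_R0 f N = (\sum_(0 <= k < N.+1) f k)%R.
Proof.
  elim: N => [|N IH]; first by rewrite big_nat1.
  rewrite big_nat_recr //= -IH. by [].
Qed.

Lemma negl_null (A : set RT) : lebesgue_measure.-negligible A -> lebesgue_null A.
Proof.
  move/negligible_outer_measure => H0 eps Heps.
  rewrite outer_measure_open_itv_cover in H0.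
  have Heps' : (0 < eps)%R by apply/RltP.
  have fin : ereal_inf [set \big[+%E/0%R]_(0 <= k <oo) wlength idfun (F k)
            | F in open_itv_cover A] \is a fin_num by rewrite H0.
  have [x [F [Fitv AF] <-] Hx] := lb_ereal_inf_adherent Heps' fin.
  rewrite H0 add0e in Hx.
  pose ab k := projT1 (cid (Fitv k)).
  have Fk k : F k = `](ab k).1, (ab k).2[%classic := projT2 (cid (Fitv k)).
  exists (fun k => (ab k).1), (fun k => Rmax (ab k).1 (ab k).2). split; [|split].
  - move=> k. apply Rmax_l.
  - move=> y Hy. case: (AF y Hy) => k _ Hk. exists k. rewrite Fk /= in_itv /= in Hk.
    move/andP: Hk => [/RltP H1 /RltP H2]. cbv beta. move: H1 H2.
    case: (ab k) => a b /= H1 H2. split; [lra|].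
    apply Rle_trans with b; [lra|apply Rmax_r].
  - move=> N.
    have L : forall k, wlength idfun (F k) = ((Rmax (ab k).1 (ab k).2 - (ab k).1)%R)%:E.
    { move=> k. rewrite Fk wlength_itv /=. case: ifPn.
      - case: (ab k) => a b /=. rewrite lte_fin => /RltP H. rewrite Rmax_right; [by []|lra].
      - case: (ab k) => a b /=. rewrite lte_fin => /RltP H. rewrite Rmax_left; [|by apply Rnot_lt_le]. by rewrite subrr. }
    apply/RleP. rewrite -lee_fin sum_f_big -sumEFin. apply: le_trans (ltW Hx).
    have E : \sum_(0 <= k <oo) wlength idfun (F k) =
             \sum_(0 <= k <oo) ((Rmax (ab k).1 (ab k).2 - (ab k).1)%R)%:E.
    { apply: eq_eseriesr => k _. exact: L. }
    rewrite E. apply: nneseries_lim_ge => k _ _. rewrite lee_fin. apply/RleP.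
    case: (ab k) => a b /=. rewrite -R0E. have := Rmax_l a b. lra.
Qed.


Lemma Zset_meas V n : measurable (Zset V n).
Proof. apply: bigcapT_measurable => M. apply: bigcupT_measurable => k. exact: Eset_meas. Qed.

Lemma infhit_Z V n CT x : VarB V n CT -> InfHit V n x -> Zset V n x.
Proof.
  move=> HV Hi M _. have HC := VarB_Bnd V n CT HV.
  destruct (infhit_cnt V n CT x HC Hi M.+1) as [k Hk]. by exists k.
Qed.

Theorem lemma1 (V : R -> R) (hV : cadlag V) (hfv : finite_variation_loc V) :
  lebesgue_null (complex_level V).
Proof.
  apply: (negl_null (complex_level V)).
  pose BIG : set RT := ((V @` Jset V) `|` (LL V @` Jset V)) `|` \bigcup_n Zset V n.
  have Hsub : (complex_level V : set RT) `<=` BIG.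
  { rewrite /BIG. move=> x /complex_split [[t [l [Ht [Hl [Hne Hx]]]]]|[a [Ha Hacc]]].
    + left. destruct (jump_m V t l Ht Hl Hne) as [m Hm].
      have Jt : Jset V t by exists m.
      case: Hx => Hx.
      * left. by exists t.
      * right. exists t => //. rewrite Hx. apply: (left_lim_unique V t) => //.
        apply: xgetPex. by exists l.
    + right. destruct (acc_infhit V x a Ha Hacc) as [n Hn]. exists n => //.
      destruct (hfv (INR (S n))) as [CT HCT]; first exact: pos_INR.
      exact: (infhit_Z V n CT x HCT Hn). }
  have Hn : lebesgue_measure.-negligible BIG.
  { apply: negligibleU; first exact: JL_null.
    apply: negligible_bigcup => n. exists (Zset V n); split => //.
    + exact: Zset_meas.
    + destruct (hfv (INR (S n))) as [CT HCT]; first exact: pos_INR.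
      exact: (Zset_null V n CT HCT). }
  case: Hn => A0 [mA0 A00 HA0]. exists A0; split => //. exact: subset_trans Hsub HA0.
Qed.
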